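(* Let $p$ be an odd prime, $\xi=e^{2\pi i/p}$, $0\neq n\in\mathbb Z$. Let $Y,\widetilde Y\in\mathrm{Sp}(p-1,\mathbb Z[1/n])$ have order $p$, and let $\alpha,\beta\in\mathbb Z[1/n][\xi]^{p-1}$ with $Y\alpha=\xi\alpha$ and $\widetilde Y\beta=\xi\beta$ (nonzero). Let $\mathfrak a$, resp. $\mathfrak b$, be the ideal of $\mathbb Z[1/n][\xi]$ with $\mathbb Z[1/n]$-basis the entries of $\alpha$, resp. $\beta$, and put $a=D^{-1}\alpha^{\mathrm T}J\overline\alpha$, $b=D^{-1}\beta^{\mathrm T}J\overline\beta$. Then $Y$ and $\widetilde Y$ are conjugate in $\mathrm{Sp}(p-1,\mathbb Z[1/n])$ if and only if $[\mathfrak a,a]=[\mathfrak b,b]$.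
   Context: $\mathrm{Sp}(2m,R)=\{M\in\mathrm{GL}(2m,R): M^{\mathrm T}JM=J\}$ with $J=\begin{pmatrix}0&I_m\\-I_m&0\end{pmatrix}$. $D=p\,\xi^{(p+1)/2}/(\xi-1)$. Bar is complex conjugation. For pairs $(\mathfrak a,a)$ of an ideal $\mathfrak a\subseteq\mathbb Z[1/n][\xi]$ and $0\neq a$ with $\mathfrak a\overline{\mathfrak a}=(a)$, $[\mathfrak a,a]=[\mathfrak b,b]$ means there exist nonzero $\lambda,\mu\in\mathbb Z[1/n][\xi]$ with $\lambda\mathfrak a=\mu\mathfrak b$ and $\lambda\overline\lambda a=\mu\overline\mu b$. *)

(* Defs.v *)
(* everything lives inside the algebraic complex numbers algC,
   whose conjugation ^* is complex conjugation. *)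
From HB Require Import structures.
From mathcomp Require Import all_boot all_order all_algebra.
From mathcomp Require Import algC.
Set Implicit Arguments. Unset Strict Implicit. Unset Printing Implicit Defensive.
Import Order.TTheory GRing.Theory Num.Theory.
Local Open Scope ring_scope.

(* xi = e^{2 pi i / p}: p.-root (-1) is e^{i pi / p} (minimal argument root). *)
Definition xi (p : nat) : algC := (p.-root (-1 : algC)) ^+ 2.

Definition inZinv (n : int) (x : algC) : Prop :=
  exists (m : int) (k : nat), x = m%:~R / (n%:~R) ^+ k.

Definition inZinvxi (n : int) (p : nat) (x : algC) : Prop :=
  exists q : {poly algC}, (forall i, inZinv n q`_i) /\ x = q.[xi p].

Definition mxZinv (n : int) (N M : nat) (A : 'M[algC]_(N, M)) : Prop :=
  forall i j, inZinv n (A i j).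

(* J = [[0, I_m], [-I_m, 0]] of size N = 2m. *)
Definition Jmx (N : nat) : 'M[algC]_N :=
  \matrix_(i < N, j < N) (if (i < N./2)%N && (nat_of_ord j == nat_of_ord i + N./2)%N then 1
                  else if (N./2 <= i)%N && (nat_of_ord i == nat_of_ord j + N./2)%N then -1 else 0).

Definition inSp (n : int) (N : nat) (M : 'M[algC]_N) : Prop :=
  [/\ mxZinv n M, M \in unitmx, mxZinv n (invmx M) & M^T *m Jmx N *m M = Jmx N].

Definition Dconst (p : nat) : algC :=
  p%:R * xi p ^+ (p.+1./2) / (xi p - 1).

Definition spanZinv (n : int) (N : nat) (al : 'cV[algC]_N) (x : algC) : Prop :=
  exists c : 'I_N -> algC, (forall i, inZinv n (c i)) /\ x = \sum_i c i * al i 0.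

Definition herm_const (p : nat) (al : 'cV[algC]_p.-1) : algC :=
  (Dconst p)^-1 * (al^T *m Jmx p.-1 *m map_mx Num.conj al) 0 0.

(* [frak a, a] = [frak b, b]: nonzero lambda, mu in Z[1/n][xi] with
   lambda frak a = mu frak b (as sets) and lambda conj(lambda) a = mu conj(mu) b. *)
Definition pair_class_eq (n : int) (p : nat) (N : nat)
    (al : 'cV[algC]_N) (a : algC) (be : 'cV[algC]_N) (b : algC) : Prop :=
  exists la mu : algC,
    [/\ inZinvxi n p la /\ inZinvxi n p mu, la != 0, mu != 0,
        (forall z, (exists x, spanZinv n al x /\ z = la * x) <->
                   (exists y, spanZinv n be y /\ z = mu * y)) &
        la * Num.conj la * a = mu * Num.conj mu * b].
Arguments herm_const p al : clear implicits.

(* Main.v *)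
Require Import Defs.
From HB Require Import structures.
From mathcomp Require Import all_boot all_order all_algebra.
From mathcomp Require Import algC.
Import Order.TTheory GRing.Theory Num.Theory.
Local Open Scope ring_scope.
From mathcomp Require Import algnum zify ring.
From Stdlib Require Import Lia.
Set Implicit Arguments. Unset Strict Implicit. Unset Printing Implicit Defensive.

Lemma xi_prim p : prime p -> p.-primitive_root (xi p).
Proof.
move=> pr; have p1 := prime_gt1 pr; have p0 := prime_gt0 pr.
set r := p.-root (-1 : algC).
have rp : r ^+ p = -1 by rewrite rootCK.
have xp : xi p ^+ p = 1 by rewrite /xi -exprM mulnC exprM rp sqrrN expr1n.
have [m pm mp] := prim_order_exists p0 xp.
have /primeP [_ H] := pr.
case/orP: (H m mp) => /eqP Em; last by rewrite Em in pm.
exfalso; move: pm; rewrite Em => pm.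
have x1 : xi p = 1 by have := prim_expr_order pm; rewrite expr1.
have : (r - 1) * (r + 1) = 0 by rewrite mulrDr mulr1 mulrBl mul1r addrA subrK -expr2 -/r; move: x1; rewrite /xi -/r => ->; rewrite subrr.
move/eqP; rewrite mulf_eq0 => /orP [|].
  rewrite subr_eq0 => /eqP r1; move: rp; rewrite r1 expr1n => /eqP.
  by rewrite -subr_eq0 opprK -(natrD _ 1 1) pnatr_eq0.
rewrite addr_eq0 => /eqP rN.
by have := rootC_lt0 (-1 : algC) p1; rewrite -/r rN ltrN10.
Qed.

Lemma horner_aut (f : {rmorphism algC -> algC}) (q : {poly algC}) y :
  (forall i, q`_i \in Crat) -> f q.[y] = q.[f y].
Proof.
move=> Hq; rewrite -horner_map map_poly_id // => c /(nthP 0) [i _ <-].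
exact: aut_Crat.
Qed.

Lemma conj_horner (q : {poly algC}) y :
  (forall i, q`_i \in Crat) -> (q.[y])^* = q.[y^*].
Proof. exact: (horner_aut Num.conj_op). Qed.

Lemma conj_xi p : prime p -> (xi p)^* = xi p ^+ p.-1.
Proof.
move=> pr; have pm := xi_prim pr; have p0 := prime_gt0 pr.
have xp := prim_expr_order pm.
have n1 : `|xi p| = 1.
  apply/eqP; rewrite -(pexpr_eq1 p0) // -normrX xp normr1 //.
have h : xi p * (xi p)^* = 1 by rewrite -normCK n1 expr1n.
have h2 : xi p * xi p ^+ p.-1 = 1 by rewrite -exprS prednK.
have nz : xi p != 0 by rewrite (prim_root_eq0 pm) -lt0n.
by apply: (mulfI nz); rewrite h h2.
Qed.
Lemma eig_full (F : fieldType) (N : nat) (g : 'M[F]_N) (a : 'I_N -> F) (r : 'I_N -> 'rV[F]_N) :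
 injective a -> (forall i, r i *m g = a i *: r i) -> (forall i, r i != 0) ->
 (forall i, (eigenspace g (a i) <= r i)%MS) /\ (1%:M <= \sum_i eigenspace g (a i))%MS.
Proof.
move=> inja rg rnz.
have dx := @mxdirect_sum_eigenspace F _ N g predT a (in2W inja).
move: dx; rewrite mxdirectE /= => /eqP dx.
have rW i : (r i <= eigenspace g (a i))%MS by apply/eigenspaceP.
have W1 i : (1 <= \rank (eigenspace g (a i)))%N.
  by apply: leq_trans (mxrankS (rW i)); rewrite rank_rV rnz.
have le : (\sum_i \rank (eigenspace g (a i)) <= N)%N.
  by rewrite -dx rank_leq_col.
have Weq i : \rank (eigenspace g (a i)) = 1%N.
  apply/eqP; rewrite eqn_leq W1 andbT; apply: contraLR le; rewrite -ltnNge => H.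
  rewrite -ltnNge (bigD1 i) //=.
  have : (\sum_(j | j != i) 1 <= \sum_(j | j != i) \rank (eigenspace g (a j)))%N.
    by apply: leq_sum => j _; apply: W1.
  rewrite sum1_card cardC1 card_ord => H2.
  have Hi := ltn_ord i; apply: leq_trans (leq_add H H2).
  by rewrite add2n prednK // (leq_ltn_trans (leq0n i) Hi).
split.
  move=> i; have := mxrank_leqif_sup (rW i).
  rewrite rank_rV rnz Weq => -[_]. by rewrite eqxx => <-.
rewrite sub1mx /row_full eqn_leq rank_leq_col /= dx.
by rewrite (eq_bigr (fun _ => 1%N)) // sum1_card card_ord.
Qed.

Lemma map_trmx' (f : {rmorphism algC -> algC}) m n (A : 'M[algC]_(m, n)) :
  (map_mx f A)^T = map_mx f A^T.
Proof. by apply/matrixP => i j; rewrite !mxE. Qed.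

Definition QxiC p x := exists q : {poly algC}, (forall k, q`_k \in Crat) /\ x = q.[xi p].

Lemma trZ (R : pzRingType) m n (a : R) (A : 'M[R]_(m, n)) : (a *: A)^T = a *: A^T.
Proof. by apply/matrixP => i j; rewrite !mxE. Qed.

Lemma map_Crat (f : {rmorphism algC -> algC}) m n (A : 'M[algC]_(m, n)) :
  A \is a mxOver Crat -> map_mx f A = A.
Proof. by move/mxOverP => H; apply/matrixP => i j; rewrite mxE aut_Crat. Qed.

Lemma eig_main p (Z : 'M[algC]_p.-1) (v : 'cV[algC]_p.-1) :
  prime p -> Z \is a mxOver Crat -> (forall i, QxiC p (v i 0)) -> v != 0 ->
  Z *m v = xi p *: v ->
  [/\ forall m (A : 'M_(m, p.-1)), A \is a mxOver Crat -> A *m v = 0 -> A = 0,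
      forall M : 'M_p.-1, M \is a mxOver Crat -> Z^T *m M *m Z = M ->
         v^T *m M *m map_mx Num.conj v = 0 -> M = 0
    & forall w, Z *m w = xi p *: w -> exists c, w = c *: v].
Proof.
move=> pr ZQ vQ vnz Zv.
have pm := xi_prim pr; have p0 := prime_gt0 pr.
have xp := prim_expr_order pm.
set N := p.-1.
have U : forall i : 'I_N, {u : {rmorphism algC -> algC} | forall z, z ^+ p = 1 -> u z = z ^+ i.+1}.
  move=> i; apply: Qn_aut_exists; rewrite coprime_sym prime_coprime //.
  apply/negP => /dvdn_leq; have := ltn_ord i; rewrite /N; lia.
pose u i := sval (U i).
have uE i : u i (xi p) = xi p ^+ i.+1 by rewrite /u; case: (U i) => f /= ->.
have uZ i : map_mx (u i) Z = Z by apply: map_Crat.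
pose r i := (map_mx (u i) v)^T.
have rg i : r i *m Z^T = xi p ^+ i.+1 *: r i.
  by rewrite /r -trmx_mul -{1}(uZ i) -map_mxM Zv map_mxZ uE trZ.
have rnz i : r i != 0 by rewrite /r trmx_eq0 map_mx_eq0.
have inja : injective (fun i : 'I_N => xi p ^+ i.+1).
  move=> i j /eqP; rewrite (eq_prim_root_expr pm) !modn_small => [/eqP [] /val_inj //| |];
  have := ltn_ord i; have := ltn_ord j; rewrite /N; lia.
have [Wr full] := eig_full inja rg rnz.
have kill : forall m (B : 'M_(N, m)), (forall i, r i *m B = 0) -> B = 0.
  move=> m B HB.
  have : (\sum_(i < N) eigenspace Z^T (xi p ^+ i.+1) <= kermx B)%MS.
    apply/sumsmx_subP => i _; apply: submx_trans (Wr i) _; exact/sub_kermxP.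
  by move=> /(submx_trans full)/sub_kermxP; rewrite mul1mx.
have N0 : (0 < N)%N by rewrite /N; have := prime_gt1 pr; lia.
pose i0 := Ordinal N0.
have u0 : map_mx (u i0) v = v.
  apply/matrixP => i j; rewrite mxE (ord1 j).
  by have [q [Hq ->]] := vQ i; rewrite horner_aut // uE expr1.
split.
- move=> m A AQ Av; apply/trmx_inj; rewrite trmx0; apply: (kill) => i.
  by rewrite /r -trmx_mul -{1}(map_Crat (u i) AQ) -map_mxM Av map_mx0 trmx0.
- move=> M MQ ZM vM.
  have H i j : r i *m M *m (r j)^T = 0.
    set s := r i *m M *m (r j)^T.
    have Zr : Z *m (r j)^T = xi p ^+ j.+1 *: (r j)^T.
      by rewrite -[Z]trmxK -trmx_mul rg trZ.
    have sE : s = (xi p ^+ i.+1 * xi p ^+ j.+1) *: s.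
      rewrite /s -{1}ZM !mulmxA rg -mulmxA Zr -scalemxAl.
      by rewrite -!scalemxAr !scalemxAl !scalerA mulrC.
    have [c1|c1] := eqVneq (xi p ^+ i.+1 * xi p ^+ j.+1) 1; last first.
      apply/eqP; move: sE => /eqP; rewrite -subr_eq0 -{1}[s]scale1r -scalerBl.
      by rewrite scalemx_eq0 subr_eq0 eq_sym (negbTE c1).
    have ij : (i.+1 + j.+1 = p)%N.
      move: c1 => /eqP; rewrite -exprD -(prim_order_dvd pm) => /dvdnP [k Hk].
      have hi : (i.+2 <= p)%N by rewrite -(prednK p0) ltnS; exact: ltn_ord i.
      have hj : (j.+2 <= p)%N by rewrite -(prednK p0) ltnS; exact: ltn_ord j.
      have : (k < 2)%N.
        rewrite ltnNge; apply/negP => H2.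
        have := leq_mul H2 (leqnn p); lia.
      by case: k Hk => [|[|k]] Hk; lia.
    have E : (r j)^T = map_mx (u i) (map_mx Num.conj v).
      rewrite trmxK; apply/matrixP => a b; rewrite !mxE (ord1 b).
      have [q [Hq ->]] := vQ a.
      rewrite conj_horner // conj_xi // !horner_aut // uE rmorphXn uE; congr q.[_].
      have nz : xi p ^+ i.+1 != 0 by rewrite expf_neq0 // (prim_root_eq0 pm) -lt0n.
      apply: (mulIf nz); rewrite -exprD addnC ij xp.
      by rewrite -exprSr prednK // exprAC xp expr1n.
    rewrite /s E /r map_trmx'.
    rewrite -{1}(map_Crat (u i) MQ) -!map_mxM vM map_mx0 //.
  apply/trmx_inj; rewrite trmx0; apply: (kill) => j.
  apply/trmx_inj; rewrite trmx0 trmx_mul trmxK; apply: (kill) => i.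
  by rewrite mulmxA H.
- move=> w Zw.
  have : (w^T <= eigenspace Z^T (xi p ^+ i0.+1))%MS.
    by apply/eigenspaceP; rewrite -trmx_mul Zw trZ expr1.
  move=> /submx_trans /(_ (Wr i0)); rewrite /r u0 => /sub_rVP [c Hc].
  by exists c; apply: trmx_inj; rewrite trZ.
Qed.

Section Glue.
Variable (n : int) (p : nat).
Hypothesis n0 : n != 0.

Lemma inZinv_Crat x : inZinv n x -> x \in Crat.
Proof. by move=> [m [k ->]]; rewrite rpredM ?rpredV ?rpredX ?rpred_int. Qed.

Lemma mxZinv_Crat N M (A : 'M_(N, M)) : mxZinv n A -> A \is a mxOver Crat.
Proof. by move=> H; apply/mxOverP => i j; apply: inZinv_Crat. Qed.

Lemma inZinv0 : inZinv n 0.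
Proof. by exists 0, 0%N; rewrite mul0r. Qed.

Lemma inZinv1 : inZinv n 1.
Proof. by exists 1, 0%N; rewrite expr0 divr1. Qed.

Lemma inZinvD x y : inZinv n x -> inZinv n y -> inZinv n (x + y).
Proof.
move=> [a [k ->]] [b [l ->]].
have nz : (n%:~R : algC) != 0 by rewrite intr_eq0.
exists (a * n ^+ l + b * n ^+ k), (k + l)%N.
rewrite rmorphD !rmorphM /= !rmorphXn exprD.
by field; rewrite !expf_neq0.
Qed.

Lemma inZinvM x y : inZinv n x -> inZinv n y -> inZinv n (x * y).
Proof.
move=> [a [k ->]] [b [l ->]].
exists (a * b), (k + l)%N.
by rewrite rmorphM exprD invfM /=; ring.
Qed.

Lemma inZinv_sum (I : finType) (F : I -> algC) :
  (forall i, inZinv n (F i)) -> inZinv n (\sum_i F i).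
Proof.
move=> H; apply: (big_ind (inZinv n)) => //; [exact: inZinv0 | exact: inZinvD].
Qed.

Lemma inZinvxi_QxiC x : inZinvxi n p x -> QxiC p x.
Proof. by move=> [q [Hq ->]]; exists q; split=> // i; apply: inZinv_Crat. Qed.

Lemma inZinvxi_lin (I : finType) (c x : I -> algC) :
  (forall i, inZinv n (c i)) -> (forall i, inZinvxi n p (x i)) ->
  inZinvxi n p (\sum_i c i * x i).
Proof.
move=> Hc Hx; apply: (big_ind (inZinvxi n p)).
- by exists 0; split; [move=> i; rewrite coef0; exact: inZinv0 | rewrite horner0].
- move=> _ _ [q1 [H1 ->]] [q2 [H2 ->]]; exists (q1 + q2); split.
    by move=> i; rewrite coefD; apply: inZinvD.
  by rewrite hornerD.
- move=> i _; have [q [Hq ->]] := Hx i; exists (c i *: q); split.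
    by move=> k; rewrite coefZ; apply: inZinvM.
  by rewrite hornerZ.
Qed.

Lemma span_mul N (A : 'M_N) (al : 'cV_N) x :
  mxZinv n A -> spanZinv n (A *m al) x -> spanZinv n al x.
Proof.
move=> HA [c [Hc ->]].
exists (fun j => \sum_i c i * A i j); split.
  by move=> j; apply: inZinv_sum => i; apply: inZinvM.
under eq_bigr do rewrite mxE mulr_sumr.
rewrite exchange_big /=; apply: eq_bigr => j _.
by rewrite mulr_suml; apply: eq_bigr => i _; rewrite mulrA.
Qed.

Lemma span_scale N (a : algC) (v : 'cV_N) z :
  spanZinv n (a *: v) z <-> exists y, spanZinv n v y /\ z = a * y.
Proof.
split.
  move=> [c [Hc ->]]; exists (\sum_i c i * v i 0); split; first by exists c.
  by rewrite mulr_sumr; apply: eq_bigr => i _; rewrite mxE mulrCA.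
move=> [y [[c [Hc ->]] ->]]; exists c; split=> //.
by rewrite mulr_sumr; apply: eq_bigr => i _; rewrite mxE mulrCA.
Qed.

Lemma span_self N (v : 'cV_N) i : spanZinv n v (v i 0).
Proof.
exists (fun j => (j == i)%:R); split.
  by move=> j; case: (j == i); [exact: inZinv1 | exact: inZinv0].
rewrite (bigD1 i) //= eqxx mul1r big1 ?addr0 // => j /negbTE ->.
by rewrite mul0r.
Qed.

End Glue.

Lemma J_Crat N : Jmx N \is a mxOver Crat.
Proof.
apply/mxOverP => i j; rewrite mxE.
by case: ifP => _; [|case: ifP => _]; rewrite ?rpredN ?rpred1 ?rpred0.
Qed.

Lemma D_neq0 p : prime p -> Dconst p != 0.
Proof.
move=> pr; have pm := xi_prim pr; have p0 := prime_gt0 pr.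
rewrite /Dconst !mulf_neq0 ?invr_eq0 ?pnatr_eq0 -?lt0n //.
  by rewrite expf_neq0 // (prim_root_eq0 pm) -lt0n.
rewrite subr_eq0; apply/eqP => x1.
have := prim_order_dvd pm 1; rewrite expr1 x1 eqxx dvdn1 => /eqP p1.
by move: (prime_gt1 pr); rewrite p1.
Qed.

Definition sform N (v : 'cV[algC]_N) := (v^T *m Jmx N *m map_mx Num.conj v) 0 0.

Lemma sform_scale N a (v : 'cV_N) : sform (a *: v) = a * a^* * sform v.
Proof.
rewrite /sform trZ map_mxZ -!scalemxAl -scalemxAr scalerA mxE.
by [].
Qed.

Lemma sform_mul N (P : 'M_N) (v : 'cV_N) :
  P \is a mxOver Crat -> P^T *m Jmx N *m P = Jmx N -> sform (P *m v) = sform v.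
Proof.
move=> PQ PJ; rewrite /sform map_mxM (map_Crat _ PQ) trmx_mul.
by rewrite !mulmxA -(mulmxA _ P^T) -(mulmxA _ (P^T *m _)) PJ.
Qed.

Lemma build_Q (n : int) N (v w : 'cV[algC]_N) la mu : mu != 0 ->
  (forall i, exists y, spanZinv n w y /\ la * v i 0 = mu * y) ->
  exists Q, mxZinv n Q /\ Q *m w = (la / mu) *: v.
Proof.
move=> mu0 H.
have H' : forall i, exists c : 'rV[algC]_N,
    (forall j, inZinv n (c 0 j)) /\ la * v i 0 = mu * \sum_j c 0 j * w j 0.
  move=> i; have [y [[c [Hc ->]] E]] := H i.
  by exists (\row_j c j); split=> [j|]; rewrite ?mxE //; under eq_bigr do rewrite mxE.
have [C HC] := fin_all_exists H'.
exists (\matrix_(i, j) C i 0 j); split.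
  by move=> i j; rewrite mxE; case: (HC i).
apply/matrixP => i k; rewrite (ord1 k) !mxE.
under eq_bigr do rewrite mxE.
case: (HC i) => _ E.
by apply: (mulfI mu0); rewrite -E; field.
Qed.

Lemma mxQ1 N : (1%:M : 'M[algC]_N) \is a mxOver Crat.
Proof. by apply/mxOverP => i j; rewrite mxE; case: (i == j); rewrite ?rpred1 ?rpred0. Qed.

Lemma mxQT N M (A : 'M[algC]_(N, M)) : A \is a mxOver Crat -> A^T \is a mxOver Crat.
Proof. by move/mxOverP => H; apply/mxOverP => i j; rewrite mxE. Qed.

Lemma mxQB N M (A B : 'M[algC]_(N, M)) : A \is a mxOver Crat -> B \is a mxOver Crat ->
  A - B \is a mxOver Crat.
Proof. by move=> /mxOverP HA /mxOverP HB; apply/mxOverP => i j; rewrite !mxE rpredB. Qed.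

Unset Implicit Arguments.

Theorem lemma3p6 (p : nat) (n : int) (Y Yt : 'M[algC]_p.-1)
    (al be : 'cV[algC]_p.-1) :
  prime p -> odd p -> n != 0 ->
  inSp n Y -> inSp n Yt ->
  Y ^+ p = 1%:M -> Y != 1%:M ->
  Yt ^+ p = 1%:M -> Yt != 1%:M ->
  (forall i, inZinvxi n p (al i 0)) -> (forall i, inZinvxi n p (be i 0)) ->
  al != 0 -> be != 0 ->
  Y *m al = xi p *: al -> Yt *m be = xi p *: be ->
  ((exists P : 'M[algC]_p.-1, inSp n P /\ P *m Y *m invmx P = Yt) <->
   pair_class_eq n p al (herm_const p al) be (herm_const p be)).
Proof.
move=> pr podd n0 YSp YtSp Yp Y1 Ytp Yt1 alQ beQ al0 be0 Yal Ytbe.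
have YQ : Y \is a mxOver Crat by case: YSp => H _ _ _; apply: mxZinv_Crat H.
have YtQ : Yt \is a mxOver Crat by case: YtSp => H _ _ _; apply: mxZinv_Crat H.
have YJ : Y^T *m Jmx p.-1 *m Y = Jmx p.-1 by case: YSp.
have YtJ : Yt^T *m Jmx p.-1 *m Yt = Jmx p.-1 by case: YtSp.
have [indA _ eigA] := eig_main pr YQ (fun i => inZinvxi_QxiC (alQ i)) al0 Yal.
have [indB formB eigB] := eig_main pr YtQ (fun i => inZinvxi_QxiC (beQ i)) be0 Ytbe.
have JQ := J_Crat p.-1.
have hE v : herm_const p v = (Dconst p)^-1 * sform v by [].
split.
- move=> [P [[PZ Pu PiZ PJ] PY]].
  have PQ := mxZinv_Crat PZ.
  set w := P *m al.
  have Ytw : Yt *m w = xi p *: w.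
    by rewrite /w -PY -!mulmxA mulKmx // Yal -scalemxAr.
  have w0 : w != 0.
    by apply: contraNneq al0 => H; rewrite -(mulKmx Pu al) -/w H mulmx0.
  have [c wE] := eigB w Ytw.
  have [i bi] : exists i, be i 0 != 0.
    apply/existsP; apply: contraNT be0 => /existsPn H.
    apply/eqP/matrixP => a b; rewrite (ord1 b) mxE.
    by have := H a; rewrite negbK => /eqP.
  have c0 : c != 0 by apply: contraNneq w0 => c0'; rewrite wE c0' scale0r.
  have wi : w i 0 = c * be i 0 by rewrite wE mxE.
  have key : be i 0 *: w = w i 0 *: be by rewrite wi wE scalerA mulrC.
  exists (be i 0), (w i 0); split.
  + split; first exact: beQ.
    rewrite /w mxE; apply: (inZinvxi_lin n0) => j; [exact: PZ | exact: alQ].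
  + exact: bi.
  + by rewrite wi mulf_neq0.
  + move=> z; split.
      move=> [x [Hx ->]].
      have Hx' : spanZinv n w x.
        by apply: (span_mul n0 PiZ); rewrite /w mulKmx.
      have : spanZinv n (be i 0 *: w) (be i 0 * x) by apply/span_scale; exists x.
      by rewrite key => /span_scale.
    move=> [y [Hy ->]].
    have : spanZinv n (w i 0 *: be) (w i 0 * y) by apply/span_scale; exists y.
    rewrite -key => /span_scale [x [Hx ->]]; exists x; split=> //.
    exact: (span_mul n0 PZ).
  + rewrite !hE -(sform_mul al PQ PJ) -/w.
    have := congr1 (@sform _) key; rewrite !sform_scale => E.
    by rewrite mulrCA E mulrCA.
- move=> [la [mu [[laQ muQ] la0 mu0 Hset Hh]]].
  have H1 : forall i, exists y, spanZinv n be y /\ la * al i 0 = mu * y.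
    by move=> i; apply/Hset; exists (al i 0); split => //; exact: span_self.
  have H2 : forall i, exists x, spanZinv n al x /\ mu * be i 0 = la * x.
    by move=> i; apply/Hset; exists (be i 0); split=> //; exact: span_self.
  have [Q [QZ Qbe]] := build_Q mu0 H1.
  have [Q' [Q'Z Q'al]] := build_Q la0 H2.
  have QQ := mxZinv_Crat QZ; have Q'Q := mxZinv_Crat Q'Z.
  have Q'Q1 : Q' *m Q = 1%:M.
    apply/eqP; rewrite -subr_eq0; apply/eqP; apply: indB.
      by apply: mxQB; [apply: mxOverM | apply: mxQ1].
    rewrite mulmxBl mul1mx -mulmxA Qbe -scalemxAr Q'al scalerA.
    have -> : la / mu * (mu / la) = 1 by field; rewrite ?la0 ?mu0.
    by rewrite scale1r subrr.
  have [Q'u Qu] := mulmx1_unit Q'Q1.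
  have invQ' : invmx Q' = Q by rewrite -[LHS]mulmx1 -Q'Q1 mulmxA mulVmx // mul1mx.
  have QQ'1 : Q *m Q' = 1%:M := mulmx1C Q'Q1.
  have QYt : Q *m Yt = Y *m Q.
    apply/eqP; rewrite -subr_eq0; apply/eqP; apply: indB.
      by apply: mxQB; apply: mxOverM.
    rewrite mulmxBl -!mulmxA Ytbe Qbe -!scalemxAr Qbe Yal !scalerA.
    by rewrite (mulrC (xi p)) subrr.
  have QJ : Q^T *m Jmx p.-1 *m Q = Jmx p.-1.
    apply/eqP; rewrite -subr_eq0; apply/eqP; apply: formB.
    - by apply: mxQB => //; do 2 apply: mxOverM => //; apply: mxQT.
    - rewrite mulmxBr mulmxBl YtJ.
      have -> : Yt^T *m (Q^T *m Jmx p.-1 *m Q) *m Yt = (Q *m Yt)^T *m Jmx p.-1 *m (Q *m Yt).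
        by rewrite trmx_mul !mulmxA.
      rewrite QYt.
      have -> : (Y *m Q)^T *m Jmx p.-1 *m (Y *m Q) = Q^T *m (Y^T *m Jmx p.-1 *m Y) *m Q.
        by rewrite trmx_mul !mulmxA.
      by rewrite YJ.
    - rewrite mulmxBr mulmxBl; apply/eqP; rewrite subr_eq0; apply/eqP.
      apply/matrixP => a b; rewrite !ord1 -/(sform be).
      have <- : sform (Q *m be) = (be^T *m (Q^T *m Jmx p.-1 *m Q) *m map_mx Num.conj be) 0 0.
        by rewrite /sform map_mxM (map_Crat _ QQ) trmx_mul !mulmxA.
      rewrite Qbe sform_scale.
      have Dn : (Dconst p)^-1 != 0 by rewrite invr_eq0 D_neq0.
      have mc : mu^* != 0 by rewrite conjC_eq0.
      move: Hh; rewrite !hE => Hh.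
      have cdiv : (la / mu)^* = la^* / mu^* by rewrite rmorphM fmorphV.
      rewrite cdiv.
      apply: (mulfI (mulf_neq0 (mulf_neq0 mu0 mc) Dn)).
      rewrite -[RHS]mulrA -Hh; field.
      by rewrite D_neq0 // mu0 andbT; exact: mc.
  exists Q'; split.
    split=> //; first by rewrite invQ'.
    have E : Q'^T *m (Q^T *m Jmx p.-1 *m Q) *m Q' = (Q *m Q')^T *m Jmx p.-1 *m (Q *m Q').
      by rewrite trmx_mul !mulmxA.
    by move: E; rewrite QJ QQ'1 trmx1 mul1mx mulmx1.
  by rewrite invQ' -mulmxA -QYt mulmxA Q'Q1 mul1mx.
Qed.
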